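(* Every Temperley–Lieb diagram $x$ in $\mathcal{TL}_0(\Bbbk)$ can be written uniquely as $x=x_{\mathrm{cup}}\circ x_{\mathrm{cap}}$, where $x_{\mathrm{cup}}$ is a cup diagram and $x_{\mathrm{cap}}$ is a cap diagram.
   Context: $\Bbbk$ is a field. $\mathcal{TL}_0(\Bbbk)$ is the strict $\Bbbk$-linear monoidal category with objects $\mathbf 0,\mathbf 1,\dots$, $\mathbf m\otimes\mathbf n=\mathbf{m+n}$, whose morphisms are generated under composition, tensor product and linear combination by $\mathrm{cup}:\mathbf 0\to\mathbf 2$ and $\mathrm{cap}:\mathbf 2\to\mathbf 0$ subject to $(\mathrm{id}_{\mathbf 1}\otimes\mathrm{cap})\circ(\mathrm{cup}\otimes\mathrm{id}_{\mathbf 1})=0=(\mathrm{cap}\otimes\mathrm{id}_{\mathbf 1})\circ(\mathrm{id}_{\mathbf 1}\otimes\mathrm{cup})$ and $\mathrm{cap}\circ\mathrm{cup}=\mathrm{id}_{\mathbf 0}$. A Temperley–Lieb diagram is a nonzero morphism obtainable from $\mathrm{cup}$, $\mathrm{cap}$ and identity morphisms using only $\otimes$ and $\circ$; a cup diagram (resp. cap diagram) is a nonzero morphism obtainable in this way from $\mathrm{cup}$ (resp. $\mathrm{cap}$) and identity morphisms only. *)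

(* Defs.v *)
(* A syntactic presentation of TL_0(k): the free k-linear
   strict monoidal category on cup : 0 -> 2, cap : 2 -> 0 modulo the
   relations of the paper. Morphisms m -> n are well-typed terms modulo teq. *)
From mathcomp Require Import all_boot all_algebra.
Set Implicit Arguments. Unset Strict Implicit. Unset Printing Implicit Defensive.
Import GRing.Theory.
Local Open Scope ring_scope.

Section TL.
Variable K : fieldType.

Inductive term : Type :=
| Zero of nat & nat
| Id of nat
| Cup
| Cap
| Comp of term & term
| Tens of term & term
| Add of term & term
| Scale of K & term.

Fixpoint src (t : term) : nat :=
  match t with
  | Zero m _ => m | Id n => n | Cup => 0 | Cap => 2
  | Comp _ g => src g | Tens f g => src f + src g
  | Add f _ => src f | Scale _ f => src f
  end%N.

Fixpoint tgt (t : term) : nat :=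
  match t with
  | Zero _ n => n | Id n => n | Cup => 2 | Cap => 0
  | Comp f _ => tgt f | Tens f g => tgt f + tgt g
  | Add f _ => tgt f | Scale _ f => tgt f
  end%N.

Fixpoint wt (t : term) : Prop :=
  match t with
  | Zero _ _ | Id _ | Cup | Cap => True
  | Comp f g => [/\ wt f, wt g & tgt g = src f]
  | Tens f g => wt f /\ wt g
  | Add f g => [/\ wt f, wt g, src f = src g & tgt f = tgt g]
  | Scale _ f => wt f
  end.

Inductive teq : term -> term -> Prop :=
| teq_refl f : wt f -> teq f f
| teq_sym f g : teq f g -> teq g f
| teq_trans f g h : teq f g -> teq g h -> teq f h
| teq_comp f f' g g' : teq f f' -> teq g g' -> tgt g = src f ->
    teq (Comp f g) (Comp f' g')
| teq_tens f f' g g' : teq f f' -> teq g g' -> teq (Tens f g) (Tens f' g')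
| teq_add f f' g g' : teq f f' -> teq g g' -> src f = src g -> tgt f = tgt g ->
    teq (Add f g) (Add f' g')
| teq_scale a f f' : teq f f' -> teq (Scale a f) (Scale a f')
| teq_addA f g h : wt (Add f (Add g h)) ->
    teq (Add f (Add g h)) (Add (Add f g) h)
| teq_addC f g : wt (Add f g) -> teq (Add f g) (Add g f)
| teq_add0 f : wt f -> teq (Add f (Zero (src f) (tgt f))) f
| teq_addN f : wt f -> teq (Add f (Scale (-1) f)) (Zero (src f) (tgt f))
| teq_scale1 f : wt f -> teq (Scale 1 f) f
| teq_scaleA a b f : wt f -> teq (Scale a (Scale b f)) (Scale (a * b) f)
| teq_scaleDl a b f : wt f ->
    teq (Scale (a + b) f) (Add (Scale a f) (Scale b f))
| teq_scaleDr a f g : wt (Add f g) ->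
    teq (Scale a (Add f g)) (Add (Scale a f) (Scale a g))
| teq_compA f g h : wt (Comp f (Comp g h)) ->
    teq (Comp (Comp f g) h) (Comp f (Comp g h))
| teq_comp1l f : wt f -> teq (Comp (Id (tgt f)) f) f
| teq_comp1r f : wt f -> teq (Comp f (Id (src f))) f
| teq_compDl f f' g : wt (Comp (Add f f') g) ->
    teq (Comp (Add f f') g) (Add (Comp f g) (Comp f' g))
| teq_compDr f g g' : wt (Comp f (Add g g')) ->
    teq (Comp f (Add g g')) (Add (Comp f g) (Comp f g'))
| teq_compZl a f g : wt (Comp f g) ->
    teq (Comp (Scale a f) g) (Scale a (Comp f g))
| teq_compZr a f g : wt (Comp f g) ->
    teq (Comp f (Scale a g)) (Scale a (Comp f g))
| teq_comp0l k n g : wt g -> tgt g = k ->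
    teq (Comp (Zero k n) g) (Zero (src g) n)
| teq_comp0r m k f : wt f -> src f = k ->
    teq (Comp f (Zero m k)) (Zero m (tgt f))
| teq_tensA f g h : wt f -> wt g -> wt h ->
    teq (Tens (Tens f g) h) (Tens f (Tens g h))
| teq_tens1l f : wt f -> teq (Tens (Id 0) f) f
| teq_tens1r f : wt f -> teq (Tens f (Id 0)) f
| teq_tens_id m n : teq (Tens (Id m) (Id n)) (Id (m + n))
| teq_interchange f g f' g' : wt (Comp f f') -> wt (Comp g g') ->
    teq (Comp (Tens f g) (Tens f' g')) (Tens (Comp f f') (Comp g g'))
| teq_tensDl f f' g : wt (Add f f') -> wt g ->
    teq (Tens (Add f f') g) (Add (Tens f g) (Tens f' g))
| teq_tensDr f g g' : wt f -> wt (Add g g') ->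
    teq (Tens f (Add g g')) (Add (Tens f g) (Tens f g'))
| teq_tensZl a f g : wt f -> wt g ->
    teq (Tens (Scale a f) g) (Scale a (Tens f g))
| teq_tensZr a f g : wt f -> wt g ->
    teq (Tens f (Scale a g)) (Scale a (Tens f g))
| teq_tens0l m n g : wt g ->
    teq (Tens (Zero m n) g) (Zero (m + src g) (n + tgt g))
| teq_tens0r m n f : wt f ->
    teq (Tens f (Zero m n)) (Zero (src f + m) (tgt f + n))
| teq_zig : teq (Comp (Tens (Id 1) Cap) (Tens Cup (Id 1))) (Zero 1 1)
| teq_zag : teq (Comp (Tens Cap (Id 1)) (Tens (Id 1) Cup)) (Zero 1 1)
| teq_loop : teq (Comp Cap Cup) (Id 0).

Inductive built (cupOK capOK : bool) : term -> Prop :=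
| built_id n : built cupOK capOK (Id n)
| built_cup : cupOK -> built cupOK capOK Cup
| built_cap : capOK -> built cupOK capOK Cap
| built_comp f g : built cupOK capOK f -> built cupOK capOK g ->
    tgt g = src f -> built cupOK capOK (Comp f g)
| built_tens f g : built cupOK capOK f -> built cupOK capOK g ->
    built cupOK capOK (Tens f g).

Definition nonzero (t : term) : Prop := ~ teq t (Zero (src t) (tgt t)).

Definition TL_diagram (t : term) : Prop := built true true t /\ nonzero t.
Definition cup_diagram (t : term) : Prop := built true false t /\ nonzero t.
Definition cap_diagram (t : term) : Prop := built false true t /\ nonzero t.

End TL.

(* Main.v *)
Require Import Defs.
From mathcomp Require Import all_boot all_algebra.
From mathcomp Require Import zify.
Set Implicit Arguments. Unset Strict Implicit. Unset Printing Implicit Defensive.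
Import GRing.Theory.

Ltac destr := repeat match goal with
  | H : _ /\ _ |- _ => destruct H
  | H : and3 _ _ _ |- _ => destruct H
  | H : and4 _ _ _ _ |- _ => destruct H
  | H : True |- _ => clear H
  end.
Ltac crush := intros; simpl in *; destr; repeat (match goal with |- _ /\ _ => split | |- and3 _ _ _ => split | |- and4 _ _ _ _ => split | |- True => exact I end); simpl; try assumption; try lia.

Section S.
Variable K : fieldType.
Local Notation term := (term K).
Local Notation Idt := (Id K).
Local Notation Cupt := (Cup K).
Local Notation Capt := (Cap K).
Local Notation Zt := (Zero K).

Lemma teq_inv (f g : term) : teq f g -> [/\ wt f, wt g, src f = src g & tgt f = tgt g].
Proof.
elim=> {f g}; crush.
Qed.

Lemma wtl (f g : term) : teq f g -> wt f. Proof. by case/teq_inv. Qed.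
Lemma wtr (f g : term) : teq f g -> wt g. Proof. by case/teq_inv. Qed.
Lemma srcE (f g : term) : teq f g -> src f = src g. Proof. by case/teq_inv. Qed.
Lemma tgtE (f g : term) : teq f g -> tgt f = tgt g. Proof. by case/teq_inv. Qed.

Lemma tr (f g h : term) : teq f g -> teq g h -> teq f h. Proof. exact: teq_trans. Qed.
Lemma ts (f g : term) : teq f g -> teq g f. Proof. exact: teq_sym. Qed.
Lemma rf (f : term) : wt f -> teq f f. Proof. exact: teq_refl. Qed.

Lemma compL (f f' g : term) : teq f f' -> wt g -> tgt g = src f -> teq (Comp f g) (Comp f' g).
Proof. by move=> H Hg e; apply: teq_comp => //; apply: rf. Qed.
Lemma compR (f g g' : term) : wt f -> teq g g' -> tgt g = src f -> teq (Comp f g) (Comp f g').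
Proof. by move=> Hf H e; apply: teq_comp => //; apply: rf. Qed.
Lemma tensL (f f' g : term) : teq f f' -> wt g -> teq (Tens f g) (Tens f' g).
Proof. by move=> H Hg; apply: teq_tens => //; apply: rf. Qed.
Lemma tensR (f g g' : term) : wt f -> teq g g' -> teq (Tens f g) (Tens f g').
Proof. by move=> Hf H; apply: teq_tens => //; apply: rf. Qed.

Definition L i (G : term) r := Tens (Idt i) (Tens G (Idt r)).

Lemma wtL i G r : wt G -> wt (L i G r).
Proof. by move=> ?; rewrite /L /=. Qed.
Lemma wtL' i G r : wt (L i G r) -> wt G.
Proof. by rewrite /L /=; case=> _ []. Qed.
Lemma TIcomp q (A B : term) : wt A -> wt B -> tgt B = src A ->
  teq (Comp (Tens (Idt q) A) (Tens (Idt q) B)) (Tens (Idt q) (Comp A B)).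
Proof.
move=> hA hB e; apply: tr; first by apply: teq_interchange.
by apply: tensL; [exact: (teq_comp1l (f:=Idt q)) | ].
Qed.

Lemma TIcompR r (A B : term) : wt A -> wt B -> tgt B = src A ->
  teq (Comp (Tens A (Idt r)) (Tens B (Idt r))) (Tens (Comp A B) (Idt r)).
Proof.
move=> hA hB e; apply: tr; first by apply: teq_interchange.
by apply: tensR; [ | exact: (teq_comp1l (f:=Idt r))].
Qed.

Lemma Lcomp i (F G : term) r : wt F -> wt G -> tgt G = src F ->
  teq (Comp (L i F r) (L i G r)) (L i (Comp F G) r).
Proof.
move=> hF hG e; apply: tr; first by apply: TIcomp => //=; rewrite e.
by apply: tensR => //; apply: TIcompR.
Qed.

Lemma Lcong i (F G : term) r : teq F G -> teq (L i F r) (L i G r).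
Proof. by move=> h; apply: tensR => //; apply: tensL. Qed.

Lemma LId i k r : teq (L i (Idt k) r) (Idt (i + (k + r))).
Proof.
apply: tr; last by apply: teq_tens_id.
by apply: tensR => //; apply: teq_tens_id.
Qed.

Lemma LZero i a b r : teq (L i (Zt a b) r) (Zt (i + (a + r)) (i + (b + r))).
Proof.
apply: tr; last by apply: (teq_tens0r _ _ (f:=Idt i)).
by apply: tensR => //; apply: (teq_tens0l _ _ (g:=Idt r)).
Qed.
Lemma CT1 (G Y : term) : wt G -> wt Y ->
  teq (Comp (Tens G (Idt (tgt Y))) (Tens (Idt (src G)) Y)) (Tens G Y).
Proof.
move=> hG hY; apply: tr; first by apply: teq_interchange.
by apply: teq_tens; [apply: teq_comp1r | apply: teq_comp1l].
Qed.

Lemma CT2 (G Y : term) : wt G -> wt Y ->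
  teq (Comp (Tens (Idt (tgt G)) Y) (Tens G (Idt (src Y)))) (Tens G Y).
Proof.
move=> hG hY; apply: tr; first by apply: teq_interchange.
by apply: teq_tens; [apply: teq_comp1l | apply: teq_comp1r].
Qed.

Lemma Lsplit q g d (H : term) r : wt H ->
  teq (L (q + g + d) H r) (Tens (Idt q) (Tens (Idt g) (Tens (Idt d) (Tens H (Idt r))))).
Proof.
move=> hH; rewrite /L.
apply: tr (_ : teq _ (Tens (Tens (Tens (Idt q) (Idt g)) (Idt d)) (Tens H (Idt r)))) _.
  apply: tensL => //; apply: tr; first exact: ts (teq_tens_id _ _ _).
  by apply: tensL => //; apply: ts; apply: teq_tens_id.
apply: tr; first by apply: teq_tensA.
by apply: teq_tensA.
Qed.

Lemma DC q (G H : term) d r : wt G -> wt H ->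
  teq (Comp (L q G (d + (tgt H + r))) (L (q + src G + d) H r))
      (Comp (L (q + tgt G + d) H r) (L q G (d + (src H + r)))).
Proof.
move=> hG hH.
have hY : wt (Tens (Idt d) (Tens H (Idt r))) by [].
apply: (tr (g := Tens (Idt q) (Tens G (Tens (Idt d) (Tens H (Idt r)))))).
  apply: tr; first (apply: (compR (wtL _ _ hG) (Lsplit _ _ _ _ hH)); rewrite /=; lia).
  apply: tr; first by apply: TIcomp.
  by apply: tensR => //; apply: (CT1 hG hY).
apply: ts; apply: tr; first (apply: (compL (Lsplit _ _ _ _ hH) (wtL _ _ hG)); rewrite /=; lia).
apply: tr; first by apply: TIcomp.
by apply: tensR => //; apply: (CT2 hG hY).
Qed.
Lemma DC' q (G H : term) d r a b c e : wt G -> wt H ->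
  a = q + src G + d -> b = q + tgt G + d -> c = d + (tgt H + r) -> e = d + (src H + r) ->
  teq (Comp (L q G c) (L a H r)) (Comp (L b H r) (L q G e)).
Proof. by move=> hG hH -> -> -> ->; apply: DC. Qed.

Definition isZ (t : term) := teq t (Zt (src t) (tgt t)).

Lemma isZ_of (t : term) a b : teq t (Zt a b) -> isZ t.
Proof. by move=> h; rewrite /isZ (srcE h) (tgtE h). Qed.

Lemma LshiftR i (A : term) k r : wt A -> teq (L i (Tens A (Idt k)) r) (L i A (k + r)).
Proof.
move=> hA; apply: tensR => //; apply: tr; first by apply: teq_tensA.
by apply: tensR => //; apply: teq_tens_id.
Qed.

Lemma LshiftL i (A : term) k r : wt A -> teq (L i (Tens (Idt k) A) r) (L (i + k) A r).
Proof.
move=> hA; rewrite /L; apply: tr; first by apply: tensR => //; apply: teq_tensA.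
apply: tr; first by apply: ts; apply: teq_tensA.
by apply: tensL => //; apply: teq_tens_id.
Qed.

Lemma Lloop i r : teq (Comp (L i Capt r) (L i Cupt r)) (Idt (i + (0 + r))).
Proof.
apply: tr; first by apply: Lcomp.
apply: tr; last by apply: LId.
by apply: Lcong; apply: teq_loop.
Qed.

Lemma Lzag i r : isZ (Comp (L i Capt (1 + r)) (L (i + 1) Cupt r)).
Proof.
apply: isZ_of; apply: tr.
  apply: teq_comp; first by apply: ts; apply: LshiftR.
    by apply: ts; apply: LshiftL.
  by rewrite /=; lia.
apply: tr; first by apply: Lcomp.
apply: tr; first by apply: Lcong; apply: teq_zag.
exact: LZero.
Qed.

Lemma Lzig j r : isZ (Comp (L (j + 1) Capt r) (L j Cupt (1 + r))).
Proof.
apply: isZ_of; apply: tr.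
  apply: teq_comp; first by apply: ts; apply: LshiftL.
    by apply: ts; apply: LshiftR.
  by rewrite /=; lia.
apply: tr; first by apply: Lcomp.
apply: tr; first by apply: Lcong; apply: teq_zig.
exact: LZero.
Qed.
Definition gen (g : bool * nat * nat) : term :=
  let: (c, i, r) := g in L i (if c then Cupt else Capt) r.

Fixpoint evalW n (w : seq (bool * nat * nat)) : term :=
  if w is g :: w' then Comp (gen g) (evalW n w') else Idt n.

Lemma wt_gen g : wt (gen g).
Proof. by case: g => [[c i] r] /=; case: c. Qed.

Lemma src_evalW n w : wt (evalW n w) -> src (evalW n w) = n.
Proof. by elim: w => //= g w IH [_ /IH]. Qed.

Lemma evalW_cat m n w1 w2 : wt (evalW m w1) -> wt (evalW n w2) -> tgt (evalW n w2) = m ->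
  teq (evalW n (w1 ++ w2)) (Comp (evalW m w1) (evalW n w2)).
Proof.
move=> h1 h2 e; elim: w1 h1 => [_|g w1 IH [hg hw e1]] /=.
  by rewrite -e; apply: ts; apply: teq_comp1l.
have H := IH hw.
apply: tr; first by apply: (compR hg H); rewrite (tgtE H).
by apply: ts; apply: teq_compA; split => //; exact: wtr H.
Qed.

Definition addR k (g : bool * nat * nat) := let: (c, i, r) := g in (c, i, r + k).
Definition addL k (g : bool * nat * nat) := let: (c, i, r) := g in (c, k + i, r).

Lemma gen_addR k g : teq (Tens (gen g) (Idt k)) (gen (addR k g)).
Proof.
case: g => [[c i] r] /=; rewrite /L.
apply: tr; first by apply: teq_tensA; case: c.
apply: tensR => //; apply: tr; first by apply: teq_tensA; case: c.
by apply: tensR; [case: c | apply: teq_tens_id].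
Qed.

Lemma gen_addL k g : teq (Tens (Idt k) (gen g)) (gen (addL k g)).
Proof.
case: g => [[c i] r] /=; rewrite /L.
apply: tr; first by apply: ts; apply: teq_tensA; case: c.
by apply: tensL; [apply: teq_tens_id | case: c].
Qed.

Lemma ShR k n w : wt (evalW n w) ->
  teq (Tens (evalW n w) (Idt k)) (evalW (n + k) (map (addR k) w)).
Proof.
elim: w => [_|g w IH [hg hw e]] /=; first exact: teq_tens_id.
have H := IH hw.
apply: tr; first by apply: tensR => //; apply: ts; apply: (teq_comp1l (f := Idt k)).
apply: tr; first by apply: ts; apply: teq_interchange.
apply: teq_comp; [exact: gen_addR | exact: H |].
by rewrite /= e.
Qed.

Lemma ShL k n w : wt (evalW n w) ->
  teq (Tens (Idt k) (evalW n w)) (evalW (k + n) (map (addL k) w)).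
Proof.
elim: w => [_|g w IH [hg hw e]] /=; first exact: teq_tens_id.
have H := IH hw.
apply: tr; first by apply: tensL => //; apply: ts; apply: (teq_comp1l (f := Idt k)).
apply: tr; first by apply: ts; apply: teq_interchange.
apply: teq_comp; [exact: gen_addL | exact: H |].
by rewrite /= e.
Qed.

Definition okg (b1 b2 : bool) (g : bool * nat * nat) := if g.1.1 then b1 else b2.

Lemma all_addR b1 b2 k w : all (okg b1 b2) (map (addR k) w) = all (okg b1 b2) w.
Proof. by elim: w => //= [[[c i] r] w ->]. Qed.
Lemma all_addL b1 b2 k w : all (okg b1 b2) (map (addL k) w) = all (okg b1 b2) w.
Proof. by elim: w => //= [[[c i] r] w ->]. Qed.

Lemma slice b1 b2 (x : term) : built b1 b2 x ->
  exists w, all (okg b1 b2) w /\ teq x (evalW (src x) w).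
Proof.
elim=> {x}.
- by move=> n; exists [::]; split => //; apply: rf.
- move=> h; exists [:: (true, 0, 0)]; split; first by rewrite /= /okg /= h.
  apply: ts; apply: tr; first by apply: teq_comp1r.
  apply: tr; first by apply: teq_tens1l.
  exact: teq_tens1r.
- move=> h; exists [:: (false, 0, 0)]; split; first by rewrite /= /okg /= h.
  apply: ts; apply: tr; first by apply: teq_comp1r.
  apply: tr; first by apply: teq_tens1l.
  exact: teq_tens1r.
- move=> f g _ [wf [af hf]] _ [wg [ag hg]] e.
  exists (wf ++ wg); split; first by rewrite all_cat af ag.
  apply: tr; first by apply: teq_comp; [exact: hf | exact: hg | exact: e].
  apply: ts; apply: evalW_cat; [exact: wtr hf | exact: wtr hg |].
  by rewrite -(tgtE hg).
- move=> f g _ [wf [af hf]] _ [wg [ag hg]].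
  exists (map (addR (tgt g)) wf ++ map (addL (src f)) wg); split.
    by rewrite all_cat all_addR all_addL af ag.
  have wf' := wtl hf; have wg' := wtl hg.
  apply: tr; first by apply: ts; apply: CT1.
  have H1 : teq (Tens f (Idt (tgt g))) (evalW (src f + tgt g) (map (addR (tgt g)) wf)).
    apply: tr; first by apply: tensL hf _.
    by apply: ShR; apply: wtr hf.
  have H2 : teq (Tens (Idt (src f)) g) (evalW (src f + src g) (map (addL (src f)) wg)).
    apply: tr; first by apply: tensR hg.
    by apply: ShL; apply: wtr hg.
  apply: tr; first by apply: teq_comp H1 H2 _ => /=.
  apply: ts; apply: evalW_cat; [exact: wtr H1 | exact: wtr H2 |].
  by rewrite -(tgtE H2).
Qed.
Definition cupw (w : seq (bool * nat * nat)) := all (fun g => g.1.1) w.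
Definition capw (w : seq (bool * nat * nat)) := all (fun g => ~~ g.1.1) w.

Definition NF k (X : term) := exists wc wa k',
  [/\ cupw wc, capw wa, wt (Comp (evalW k' wc) (evalW k wa)) &
      teq X (Comp (evalW k' wc) (evalW k wa))].

Lemma NF_teq k (X Y : term) : teq X Y -> NF k Y -> NF k X.
Proof. by move=> h [wc [wa [k' [? ? ? h']]]]; exists wc, wa, k'; split => //; apply: tr h h'. Qed.

Lemma isZ_teq (X Y : term) : teq X Y -> isZ Y -> isZ X.
Proof. by move=> h h'; apply: isZ_of; apply: tr h h'. Qed.

Lemma isZ_compL (f g : term) : isZ f -> wt g -> tgt g = src f -> isZ (Comp f g).
Proof.
move=> hf hg e; apply: isZ_of; apply: tr; first by apply: compL hf hg e.
by apply: teq_comp0l.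
Qed.

Lemma isZ_compR (f g : term) : wt f -> isZ g -> tgt g = src f -> isZ (Comp f g).
Proof.
move=> hf hg e; apply: isZ_of; apply: tr; first by apply: compR hf hg e.
by apply: teq_comp0r.
Qed.

Lemma compA' (f g h : term) : wt f -> wt g -> wt h -> tgt g = src f -> tgt h = src g ->
  teq (Comp f (Comp g h)) (Comp (Comp f g) h).
Proof. by move=> *; apply: ts; apply: teq_compA; split => //; split. Qed.

Lemma c1l (f : term) n : wt f -> tgt f = n -> teq (Comp (Idt n) f) f.
Proof. by move=> h <-; apply: teq_comp1l. Qed.
Lemma c1r (f : term) n : wt f -> src f = n -> teq (Comp f (Idt n)) f.
Proof. by move=> h <-; apply: teq_comp1r. Qed.

Lemma NF_prepend k (g : bool * nat * nat) (Y : term) : g.1.1 -> wt (Comp (gen g) Y) -> NF k Y -> NF k (Comp (gen g) Y).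
Proof.
move=> hg [_ hY eY] [wc [wa [k' [hc ha hw h]]]].
exists (g :: wc), wa, k'; case: hw => hU hA eUA.
have eU : tgt (evalW k' wc) = src (gen g) by rewrite -eY (tgtE h).
have hw : wt (Comp (evalW k' (g :: wc)) (evalW k wa)).
  by split => //; split => //; apply: wt_gen.
split => //; first by rewrite /cupw /= hg.
apply: tr; first by apply: (compR (wt_gen g) h).
by apply: compA' => //; apply: wt_gen.
Qed.

Lemma step_res k (X : term) (g : bool * nat * nat) Y : g.1.1 -> teq X (Comp (gen g) Y) ->
  isZ Y \/ NF k Y -> isZ X \/ NF k X.
Proof.
move=> hg hX; have [hg' hY e] := wtr hX; case=> [hZ|hN].
  by left; apply: isZ_teq hX _; apply: isZ_compR.
by right; apply: NF_teq hX _; apply: NF_prepend.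
Qed.

Lemma capThrough wc : forall i r k, cupw wc ->
  wt (Comp (gen (false, i, r)) (evalW k wc)) ->
  isZ (Comp (gen (false, i, r)) (evalW k wc)) \/ NF k (Comp (gen (false, i, r)) (evalW k wc)).
Proof.
elim: wc => [|[[c j] r2] wc IH] i r k.
  move=> _ hw; right; exists [::], [:: (false, i, r)], (i + (0 + r)); split => //.
  by apply: ts; apply: (teq_comp1l (f := Comp (gen (false, i, r)) (Idt k))).
rewrite /cupw /= => /andP [/= -> hc] [_ [_ hR eR] e] /=.
rewrite /= in e eR.
have hX : teq (Comp (L i Capt r) (Comp (L j Cupt r2) (evalW k wc)))
              (Comp (Comp (L i Capt r) (L j Cupt r2)) (evalW k wc)).
  by apply: compA' => //=; rewrite ?eR.
case: (ltngtP i j) => hij.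
- case: (boolP (j == i + 1)) => [/eqP ej|nej].
    subst j; have er : r = 1 + r2 by lia. subst r.
    left; apply: isZ_teq hX _; apply: isZ_compL => //; first exact: Lzag.
  have [d ed] : exists d, j = i + 2 + d by exists (j - i - 2); lia.
  subst j; have er : r = d + (2 + r2) by lia. subst r.
  have hD := @DC i Capt Cupt d r2 I I.
  apply: (@step_res k _ (true, i + 0 + d, r2) (Comp (gen (false, i, d + (0 + r2))) (evalW k wc))) => //.
    apply: tr hX _; apply: tr; first by apply: (compL hD hR); rewrite eR /=; lia.
    by apply: ts; apply: compA' => //=; rewrite ?eR /=; lia.
  by apply: IH => //; split => //=; rewrite eR /=; lia.
- case: (boolP (i == j + 1)) => [/eqP ei|nei].
    subst i; have er : r2 = 1 + r by lia. subst r2.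
    left; apply: isZ_teq hX _; apply: isZ_compL => //; first exact: Lzig.
  have [d ed] : exists d, i = j + 2 + d by exists (i - j - 2); lia.
  subst i; have er : r2 = d + (2 + r) by lia. subst r2.
  have hD := @DC j Cupt Capt d r I I.
  apply: (@step_res k _ (true, j, d + (0 + r)) (Comp (gen (false, j + 0 + d, r)) (evalW k wc))) => //.
    apply: tr hX _; apply: tr; first by apply: (compL (ts hD) hR); rewrite eR /=; lia.
    by apply: ts; apply: compA' => //=; rewrite ?eR /=; lia.
  by apply: IH => //; split => //=; rewrite eR /=; lia.
-
  subst j; have er : r = r2 by lia. subst r2.
  right; exists wc, [::], k; split => //.
    by split => //; rewrite (src_evalW hR).
  apply: tr hX _; apply: tr; first by apply: compL; [apply: Lloop | | rewrite eR].
  apply: tr; first by apply: c1l.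
  by apply: ts; apply: c1r => //; apply: src_evalW.
Qed.
Lemma normW n w : wt (evalW n w) -> isZ (evalW n w) \/ NF n (evalW n w).
Proof.
elim: w => [_|g w IH [hg hw e]].
  right; exists [::], [::], n; split => //.
  by apply: ts; apply: (teq_comp1l (f := Idt n)).
case: (IH hw) => [hZ|[wc [wa [k' [hc ha [hU hA eUA] hY]]]]].
  by left; apply: isZ_compR.
have eU : tgt (evalW k' wc) = src (gen g) by rewrite -e (tgtE hY).
have h1 : teq (Comp (gen g) (evalW n w)) (Comp (Comp (gen g) (evalW k' wc)) (evalW n wa)).
  apply: tr; first by apply: (compR hg hY).
  by apply: compA'.
case: g hg e eU h1 => [[c i] r] hg e eU h1.
case: c hg e eU h1 => hg e eU h1.
  right; apply: NF_teq h1 _.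
  exists ((true, i, r) :: wc), wa, k'.
  have hw3 : wt (Comp (evalW k' ((true, i, r) :: wc)) (evalW n wa)) by split => //; split.
  by split => //; apply: rf.
have hw1 : wt (Comp (gen (false, i, r)) (evalW k' wc)) by split.
case: (capThrough hc hw1) => [hZ|[wc' [wa0 [k'' [hc' ha0 [hU' hA0 e0] h2]]]]].
  by left; apply: isZ_teq h1 _; apply: isZ_compL => //; rewrite /= (src_evalW hU).
right; apply: NF_teq h1 _.
have eA0 : src (evalW k' wa0) = k' by apply: src_evalW.
have h3 := evalW_cat hA0 hA (etrans eUA (src_evalW hU)).
exists wc', (wa0 ++ wa), k''; split => //.
- by rewrite /capw all_cat; apply/andP.
- by split => //; [exact: wtl h3 | rewrite (tgtE h3)].
apply: tr; first exact: (compL h2 hA eUA).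
apply: tr; first by apply: teq_compA; split => //; split => //; rewrite eA0 eUA (src_evalW hU).
by apply: compR => //; apply: ts h3.
Qed.
Lemma built_evalW b1 b2 n w : all (okg b1 b2) w -> wt (evalW n w) -> built b1 b2 (evalW n w).
Proof.
elim: w => [_ _|[[c i] r] w IH /andP [hc hw] [_ hw' e]]; first exact: built_id.
apply: built_comp => //; last exact: IH.
apply: built_tens; first exact: built_id.
apply: built_tens; last exact: built_id.
rewrite /okg /= in hc.
by case: (c) hc => h; [apply: built_cup | apply: built_cap].
Qed.

Lemma cupw_okg w : cupw w -> all (okg true false) w.
Proof. by elim: w => //= [[[c i] r] s IH] /andP [/= h /IH ->]; rewrite /okg /= h. Qed.
Lemma capw_okg w : capw w -> all (okg false true) w.
Proof. by elim: w => //= [[[c i] r] s IH] /andP [/= h /IH ->]; rewrite /okg /=; case: (c) h. Qed.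

Lemma existence (x : term) : TL_diagram x ->
  exists (u v : term), [/\ cup_diagram u, cap_diagram v, src u = tgt v & teq x (Comp u v)].
Proof.
case=> hb hnz.
have [w [_ hx]] := slice hb.
case: (normW (wtr hx)) => [hZ|[wc [wa [k' [hc ha [hU hA e] hN]]]]].
  by case: hnz; apply: isZ_teq hx hZ.
have hxN := tr hx hN.
exists (evalW k' wc), (evalW (src x) wa); split => //.
- split.
    by apply: built_evalW => //; apply: cupw_okg.
  move=> hz; apply: hnz; apply: isZ_teq hxN _.
  exact: isZ_compL.
- split.
    by apply: built_evalW => //; apply: capw_okg.
  move=> hz; apply: hnz; apply: isZ_teq hxN _.
  exact: isZ_compR.
Qed.
Local Open Scope ring_scope.

Definition la : 'I_3 := @Ordinal 3 0 isT.
Definition lb : 'I_3 := @Ordinal 3 1 isT.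
Definition lc : 'I_3 := @Ordinal 3 2 isT.

Fixpoint words n : seq (seq 'I_3) :=
  if n is n'.+1 then [seq l :: w | l <- [:: la; lb; lc], w <- words n'] else [:: [::]].

Definition ind (b : bool) : K := if b then 1 else 0.

Lemma indA a b : ind (a && b) = ind a * ind b.
Proof. by case: a; case: b; rewrite /ind ?mulr1 ?mulr0 ?mul0r. Qed.

Fixpoint sem (t : term) (y x : seq 'I_3) : K :=
  match t with
  | Zero _ _ => 0
  | Id n => ind ((y == x) && (size x == n)%N)
  | Cup => ind ((y == [:: la; lb]) && (x == [::]))
  | Cap => ind ((y == [::]) && (x == [:: la; lb]))
  | Comp f g => \sum_(w <- words (tgt g)) sem f y w * sem g w x
  | Tens f g => sem f (take (tgt f) y) (take (src f) x) * sem g (drop (tgt f) y) (drop (src f) x)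
  | Add f g => sem f y x + sem g y x
  | Scale a f => a * sem f y x
  end.

Lemma mem_words n w : w \in words n -> size w = n.
Proof.
elim: n w => [|n IH] w; first by rewrite inE => /eqP ->.
by move=> /allpairsP [[l v] [_ /IH hv ->]] /=; rewrite hv.
Qed.

Lemma sum_nz (I : eqType) (r : seq I) (F : I -> K) : \sum_(i <- r) F i != 0 -> exists2 i, i \in r & F i != 0.
Proof.
move=> h; apply/hasP; apply: contraR h => /hasPn H.
by apply/eqP; rewrite big_seq big1 // => i /H; rewrite negbK => /eqP.
Qed.

Lemma support (t : term) y x : wt t -> sem t y x != 0 -> size y = tgt t /\ size x = src t.
Proof.
elim: t y x => [m n|n|||f IHf g IHg|f IHf g IHg|f IHf g IHg|a f IHf] y x /=.
- by rewrite eqxx.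
- move=> _; rewrite /ind; case: (y =P x) => [->|_] /=; last by rewrite eqxx.
  by case: (size x =P n) => [-> _|_] //=; rewrite eqxx.
- move=> _; rewrite /ind; case: (y =P _) => [->|_] /=; last by rewrite eqxx.
  by case: (x =P [::]) => [-> _|_] //=; rewrite eqxx.
- move=> _; rewrite /ind; case: (y =P _) => [->|_] /=; last by rewrite eqxx.
  by case: (x =P _) => [-> _|_] //=; rewrite eqxx.
- case=> hf hg e /sum_nz [w _]; rewrite mulf_eq0 negb_or => /andP [h1 h2].
  by split; [case: (IHf _ _ hf h1) | case: (IHg _ _ hg h2)].
- case=> hf hg; rewrite mulf_eq0 negb_or => /andP [h1 h2].
  case: (IHf _ _ hf h1) => e1 e2; case: (IHg _ _ hg h2) => e3 e4.
  by rewrite -(cat_take_drop (tgt f) y) -(cat_take_drop (src f) x) !size_cat e1 e2 e3 e4.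
- case=> hf hg e1 e2 h.
  have [h1|h1] : sem f y x != 0 \/ sem g y x != 0.
    case: (sem f y x =P 0) => [e0|ne]; last by left; apply/eqP.
    by right; move: h; rewrite e0 add0r.
    exact: IHf.
  by rewrite e1 e2; apply: IHg.
- move=> hf; rewrite mulf_eq0 negb_or => /andP [_ h]; exact: IHf.
Qed.

Lemma sem0 (t : term) y x : wt t -> (size y != tgt t) || (size x != src t) -> sem t y x = 0.
Proof.
move=> hw h; apply/eqP; apply: contraTT h => /(support hw) [-> ->].
by rewrite !eqxx.
Qed.
Lemma sum3 (G : 'I_3 -> K) l0 : \sum_(l <- [:: la; lb; lc]) ind (l == l0) * G l = G l0.
Proof.
rewrite !big_cons big_nil addr0.
case: l0 => [[|[|[|m]]] hm] //;
  rewrite /ind /= ?mul1r ?mul0r ?add0r ?addr0 /la /lb /lc; congr G; exact: val_inj.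
Qed.

Lemma words_S n : words n.+1 = allpairs_dep (fun l (w : seq 'I_3) => l :: w) [:: la; lb; lc] (fun _ => words n).
Proof. by []. Qed.

Lemma sum_delta n (F : seq 'I_3 -> K) z :
  \sum_(w <- words n) ind (w == z) * F w = ind (size z == n) * F z.
Proof.
elim: n F z => [|n IH] F z.
  by rewrite /= big_seq1; case: z => [|l z]; rewrite /ind /= ?mul0r.
rewrite words_S big_allpairs_dep; case: z => [|l0 z].
  rewrite big1 /ind /= ?mul0r // => l _; rewrite big1 // => w _.
  by rewrite mul0r.
rewrite (eq_bigr (fun l => ind (l == l0) * (ind (size z == n) * F (l :: z)))).
  by rewrite (sum3 (fun l => ind (size z == n) * F (l :: z))).
move=> l _; rewrite -(IH (fun w => F (l :: w))) big_distrr /=.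
by apply: eq_bigr => w _; rewrite eqseq_cons indA mulrA.
Qed.

Lemma sum_split a b (G : seq 'I_3 -> K) :
  \sum_(w <- words (a + b)) G w = \sum_(w1 <- words a) \sum_(w2 <- words b) G (w1 ++ w2).
Proof.
elim: a G => [|a IH] G; first by rewrite /= big_seq1.
rewrite addSn !words_S !big_allpairs_dep; apply: eq_bigr => l _.
exact: (IH (fun w => G (l :: w))).
Qed.
Lemma ind_false b : ~~ b -> ind b = 0.
Proof. by move/negbTE ->. Qed.

Lemma ind_size_eq (F : K) (n : nat) (s : seq 'I_3) : (size s <> n -> F = 0) -> ind (size s == n) * F = F.
Proof. by move=> h; case: eqP => [_|/h ->]; rewrite /ind ?mul1r ?mul0r. Qed.

Lemma L_comp1l (f : term) y x : wt f ->
  \sum_(w <- words (tgt f)) ind ((y == w) && (size w == tgt f)) * sem f w x = sem f y x.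
Proof.
move=> hf.
rewrite (eq_bigr (fun w => ind (w == y) * (ind (size y == tgt f) * sem f w x))); last first.
  move=> w _; rewrite mulrA -indA; congr (ind _ * _).
  by rewrite eq_sym; case: eqP => [->|].
rewrite sum_delta mulrA -indA andbb ind_size_eq // => /eqP e.
by apply: sem0 => //; rewrite e.
Qed.

Lemma L_comp1r (f : term) y x : wt f ->
  \sum_(w <- words (src f)) sem f y w * ind ((w == x) && (size x == src f)) = sem f y x.
Proof.
move=> hf.
rewrite (eq_bigr (fun w => ind (w == x) * (ind (size x == src f) * sem f y w))); last first.
  by move=> w _; rewrite indA mulrC mulrA.
rewrite sum_delta mulrA -indA andbb ind_size_eq // => /eqP e.
by apply: sem0 => //; rewrite e orbT.
Qed.

Lemma tens_id_bool (m n : nat) (y x : seq 'I_3) :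
  ((take m y == take m x) && (size (take m x) == m)) &&
  ((drop m y == drop m x) && (size (drop m x) == n)) = (y == x) && (size x == m + n).
Proof.
case: (y =P x) => [->|ne] /=.
  rewrite !eqxx /=; apply/idP/idP.
    case/andP => /eqP e1 /eqP e2.
    by rewrite -(cat_take_drop m x) size_cat e1 e2.
  move/eqP=> e; rewrite size_drop e size_takel; last by lia.
  by rewrite eqxx /=; apply/eqP; lia.
apply/negbTE; apply/negP => /andP [/andP [/eqP e1 _] /andP [/eqP e2 _]].
by apply: ne; rewrite -(cat_take_drop m y) -(cat_take_drop m x) e1 e2.
Qed.

Lemma L_tens1r (f : term) y x : wt f ->
  sem f (take (tgt f) y) (take (src f) x) * ind ((drop (tgt f) y == drop (src f) x) && (size (drop (src f) x) == 0)) = sem f y x.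
Proof.
move=> hf.
case: (boolP ((drop (tgt f) y == drop (src f) x) && (size (drop (src f) x) == 0))) => [/andP [/eqP e1 e2]|h].
  rewrite /ind mulr1; move: e2; rewrite size_drop subn_eq0 => e2.
  have e3 : size (drop (tgt f) y) == 0 by rewrite e1 size_drop subn_eq0.
  move: e3; rewrite size_drop subn_eq0 => e3.
  by rewrite !take_oversize.
rewrite /ind mulr0; apply/esym/sem0 => //.
move: h; rewrite negb_and !size_drop !subn_eq0 -!ltnNge.
case: (ltnP (src f) (size x)) => [h _|h]; first by apply/orP; right; apply/eqP; lia.
rewrite orbF (drop_oversize h).
case: (ltnP (tgt f) (size y)) => h2; first by move=> _; apply/orP; left; apply/eqP; lia.
by rewrite drop_oversize.
Qed.
Lemma L_inter (f g f' g' : term) y x : wt (Comp f f') -> wt (Comp g g') ->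
  sem (Comp (Tens f g) (Tens f' g')) y x = sem (Tens (Comp f f') (Comp g g')) y x.
Proof.
case=> hf hf' e1 [hg hg' e2] /=.
rewrite sum_split big_distrl /= !big_seq; apply: eq_bigr => w1 /mem_words h1.
rewrite big_distrr /= !big_seq; apply: eq_bigr => w2 /mem_words h2.
rewrite -e1 take_size_cat // drop_size_cat //.
by rewrite mulrACA.
Qed.

Lemma L_tensA (f g h : term) y x :
  sem (Tens (Tens f g) h) y x = sem (Tens f (Tens g h)) y x.
Proof.
rewrite /= !take_takel ?leq_addr // !take_drop !drop_drop.
by rewrite (addnC (tgt g)) (addnC (src g)) mulrA.
Qed.

Lemma ab_neq (w0 : 'I_3) : ([:: w0; la] == [:: la; lb]) = false.
Proof. by rewrite eqseq_cons /= andbF. Qed.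
Lemma ab_neq' (w0 : 'I_3) : ([:: lb; w0] == [:: la; lb]) = false.
Proof. by []. Qed.

Lemma L_zig y x : sem (Comp (Tens (Idt 1) Capt) (Tens Cupt (Idt 1))) y x = 0.
Proof.
rewrite /=; apply: big1 => w _.
case: (boolP (drop 1 w == [:: la; lb])) => [/eqP hd|_]; last by rewrite andbF /ind mulr0 mul0r.
case: w hd => [|w0 w'] //=; rewrite drop0 => ->.
by rewrite take0 /= ab_neq /ind /= !mul0r !mulr0.
Qed.

Lemma L_zag y x : sem (Comp (Tens Capt (Idt 1)) (Tens (Idt 1) Cupt)) y x = 0.
Proof.
rewrite /=; apply: big1 => w _.
case: (boolP (take 2 w == [:: la; lb])) => [/eqP hd|_]; last by rewrite ?andbF /ind ?(mulr0, mul0r).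
case: w hd => [|w0 [|w1 w']] //= [-> ->].
by rewrite /ind /= ?(mulr0, mul0r).
Qed.
Lemma L_loop y x : sem (Comp Capt Cupt) y x = sem (Idt 0) y x.
Proof.
rewrite /= (eq_bigr (fun w => ind (w == [:: la; lb]) * ind ((y == [::]) && (x == [::])))).
  rewrite (sum_delta 2 (fun _ => ind ((y == [::]) && (x == [::])))) /= mul1r.
  case: x => [|x0 x] /=; first by rewrite andbT.
  by rewrite !andbF.
move=> w _; case: (w == _); rewrite /= ?andbT ?andbF /ind;
  by case: (y == [::]); case: (x == [::]); rewrite ?mulr0 ?mul0r ?mulr1 ?mul1r.
Qed.

Lemma sound (f g : term) : teq f g -> forall y x, sem f y x = sem g y x.
Proof.
elim=> {f g}.
- by [].
- by move=> f g _ IH y x; rewrite IH.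
- by move=> f g h _ IH1 _ IH2 y x; rewrite IH1 IH2.
- move=> f f' g g' H1 IH1 H2 IH2 e y x /=; rewrite (tgtE H2).
  by apply: eq_bigr => w _; rewrite IH1 IH2.
- by move=> f f' g g' H1 IH1 H2 IH2 y x /=; rewrite (tgtE H1) (srcE H1) IH1 IH2.
- by move=> f f' g g' H1 IH1 H2 IH2 _ _ y x /=; rewrite IH1 IH2.
- by move=> a f f' _ IH y x /=; rewrite IH.
- by move=> f g h _ y x /=; rewrite addrA.
- by move=> f g _ y x /=; rewrite addrC.
- by move=> f _ y x /=; rewrite addr0.
- by move=> f _ y x /=; rewrite mulN1r subrr.
- by move=> f _ y x /=; rewrite mul1r.
- by move=> a b f _ y x /=; rewrite mulrA.
- by move=> a b f _ y x /=; rewrite mulrDl.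
- by move=> a f g _ y x /=; rewrite mulrDr.
- move=> f g h _ y x /=.
  rewrite (eq_bigr (fun w => \sum_(v <- words (tgt g)) sem f y v * sem g v w * sem h w x)); last first.
    by move=> w _; rewrite big_distrl.
  rewrite exchange_big /=; apply: eq_bigr => v _; rewrite big_distrr /=.
  by apply: eq_bigr => w _; rewrite mulrA.
- by move=> f hf y x /=; apply: L_comp1l.
- by move=> f hf y x /=; apply: L_comp1r.
- by move=> f f' g _ y x /=; rewrite -big_split /=; apply: eq_bigr => w _; rewrite mulrDl.
- move=> f g g' [_ [_ _ _ et] _] y x /=; rewrite -et -big_split /=.
  by apply: eq_bigr => w _; rewrite mulrDr.
- by move=> a f g _ y x /=; rewrite big_distrr /=; apply: eq_bigr => w _; rewrite mulrA.
- by move=> a f g _ y x /=; rewrite big_distrr /=; apply: eq_bigr => w _; rewrite mulrCA.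
- by move=> k n g _ _ y x /=; rewrite big1 // => w _; rewrite mul0r.
- by move=> m k f _ _ y x /=; rewrite big1 // => w _; rewrite mulr0.
- by move=> f g h _ _ _ y x; apply: L_tensA.
- by move=> f _ y x /=; rewrite !take0 !drop0 eqxx /ind /= mul1r.
- by move=> f hf y x /=; apply: L_tens1r.
- by move=> m n y x /=; rewrite -indA tens_id_bool.
- by move=> f g f' g' h1 h2 y x; apply: L_inter.
- by move=> f f' g [_ _ es et] _ y x /=; rewrite -es -et mulrDl.
- by move=> f g g' _ _ y x /=; rewrite mulrDr.
- by move=> a f g _ _ y x /=; rewrite mulrA.
- by move=> a f g _ _ y x /=; rewrite mulrCA.
- by move=> m n g _ y x /=; rewrite mul0r.
- by move=> m n f _ y x /=; rewrite mulr0.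
- by move=> y x; rewrite L_zig.
- by move=> y x; rewrite L_zag.
- by move=> y x; rewrite L_loop.
Qed.
Local Close Scope ring_scope.

Definition gdec (g h : bool * nat * nat) := (h.1.2 < g.1.2)%N.
Definition ginc (g h : bool * nat * nat) := (g.1.2 < h.1.2)%N.

Lemma insCup s : forall q r0 k, cupw s -> pairwise gdec s ->
  wt (Comp (gen (true, q, r0)) (evalW k s)) ->
  exists s', [/\ cupw s', pairwise gdec s', teq (Comp (gen (true, q, r0)) (evalW k s)) (evalW k s') &
    forall b, (q < b)%N -> all (fun h => h.1.2 + 2 < b)%N s -> all (fun h => h.1.2 < b)%N s'].
Proof.
elim: s => [|[[c p] r] s1 IH] q r0 k.
  move=> _ _ hw; exists [:: (true, q, r0)]; split => //; first exact: rf.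
  by move=> b /= ->.
rewrite /cupw /= => /andP [/= hc hcs] /andP [hall hps].
rewrite hc => -[_ [_ hR eR] e]; rewrite /= in e eR.
case: (ltnP p q) => hpq.
  exists [:: (true, q, r0), (true, p, r) & s1]; split => //.
  - apply/and3P; split => //; apply/andP; split; first exact: hpq.
    by apply: sub_all hall => h; rewrite /gdec /= => /ltn_trans; apply.
  - by apply: rf; split => //; split.
  move=> b hb /= /andP [hp hs1]; rewrite hb /=; apply/andP; split; first lia.
  by apply: sub_all hs1 => h /=; lia.
have [d ed] : exists d, p = q + d by exists (p - q); lia.
subst p; have er : r0 = d + (2 + r) by lia. subst r0.
have hD : teq (Comp (L q Cupt (d + (2 + r))) (L (q + d) Cupt r)) (Comp (L (q + 2 + d) Cupt r) (L q Cupt (d + (0 + r)))).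
  by apply: DC' => //=; lia.
have hw2 : wt (Comp (gen (true, q, d + (0 + r))) (evalW k s1)) by split => //=; rewrite eR /=; lia.
have [s1' [hc1 hp1 ht1 hb1]] := IH q (d + (0 + r)) k hcs hps hw2.
exists ((true, q + 2 + d, r) :: s1'); split => //.
- rewrite pairwise_cons hp1 andbT; apply: (hb1 (q + 2 + d)); first lia.
  by apply: sub_all hall => h; rewrite /gdec /=; lia.
- apply: tr; first by apply: compA' => //=; rewrite ?eR /=; lia.
  apply: tr; first by apply: (compL hD hR); rewrite eR /=; lia.
  apply: tr; first by apply: ts; apply: compA' => //=; rewrite ?eR /=; lia.
  by apply: compR => //=; lia.
- move=> b hb /= /andP [hp hs1]; apply/andP; split; first lia.
  by apply: hb1.
Qed.
Lemma insCap t : forall i r0 n, capw t -> pairwise ginc t ->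
  wt (Comp (gen (false, i, r0)) (evalW n t)) ->
  exists t', [/\ capw t', pairwise ginc t', teq (Comp (gen (false, i, r0)) (evalW n t)) (evalW n t') &
    forall b, b < i -> all (fun h => b < h.1.2) t -> all (fun h => b < h.1.2) t'].
Proof.
elim: t => [|[[c j] r] t1 IH] i r0 n.
  move=> _ _ hw; exists [:: (false, i, r0)]; split => //; first exact: rf.
  by move=> b /= ->.
rewrite /capw /= => /andP [/= hc hcs] /andP [hall hps].
move: hc; case: c hall => // hall _ [_ [_ hR eR] e]; rewrite /= in e eR.
case: (ltnP i j) => hij.
  exists [:: (false, i, r0), (false, j, r) & t1]; split => //.
  - apply/and3P; split => //; apply/andP; split; first exact: hij.
    by apply: sub_all hall => h; rewrite /ginc /=; lia.
  - by apply: rf; split => //; split.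
  move=> b hb /= /andP [hp hs1]; rewrite hb /=; apply/andP; split; first lia.
  by [].
have [d ed] : exists d, i = j + d by exists (i - j); lia.
subst i; have er : r = d + (2 + r0) by lia. subst r.
have hD : teq (Comp (L (j + d) Capt r0) (L j Capt (d + (2 + r0))))
              (Comp (L j Capt (d + (0 + r0))) (L (j + 2 + d) Capt r0)).
  by apply: ts; apply: DC' => //=; lia.
have hw2 : wt (Comp (gen (false, j + 2 + d, r0)) (evalW n t1)) by split => //=; rewrite eR /=; lia.
have [t1' [hc1 hp1 ht1 hb1]] := IH (j + 2 + d) r0 n hcs hps hw2.
exists ((false, j, d + (0 + r0)) :: t1'); split => //.
- rewrite pairwise_cons hp1 andbT; apply: (hb1 j); first lia.
  by apply: sub_all hall => h; rewrite /ginc /=.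
- apply: tr; first by apply: compA' => //=; rewrite ?eR /=; lia.
  apply: tr; first by apply: (compL hD hR); rewrite eR /=; lia.
  apply: tr; first by apply: ts; apply: compA' => //=; rewrite ?eR /=; lia.
  by apply: compR => //=; lia.
- move=> b hb /= /andP [hp hs1]; apply/andP; split; first lia.
  by apply: hb1 => //; lia.
Qed.

Lemma canonCup wc k : cupw wc -> wt (evalW k wc) ->
  exists s, [/\ cupw s, pairwise gdec s & teq (evalW k wc) (evalW k s)].
Proof.
elim: wc => [|[[c q] r0] wc IH] hc hw.
  by exists [::]; split => //; apply: rf.
move: hc; rewrite /cupw /= => /andP [/= hc0 hcs]; move: hc0 hw; case: c => // _ [hg hw e].
have [s [hs hps hts]] := IH hcs hw.
have h1 : teq (Comp (gen (true, q, r0)) (evalW k wc)) (Comp (gen (true, q, r0)) (evalW k s)).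
  by apply: compR.
have [s' [hs' hps' ht' _]] := insCup hs hps (wtr h1).
by exists s'; split => //; apply: tr h1 ht'.
Qed.

Lemma canonCap wa n : capw wa -> wt (evalW n wa) ->
  exists t, [/\ capw t, pairwise ginc t & teq (evalW n wa) (evalW n t)].
Proof.
elim: wa => [|[[c q] r0] wa IH] hc hw.
  by exists [::]; split => //; apply: rf.
move: hc; rewrite /capw /= => /andP [/= hc0 hcs]; move: hc0 hw; case: c => // _ [hg hw e].
have [s [hs hps hts]] := IH hcs hw.
have h1 : teq (Comp (gen (false, q, r0)) (evalW n wa)) (Comp (gen (false, q, r0)) (evalW n s)).
  by apply: compR.
have [s' [hs' hps' ht' _]] := insCap hs hps (wtr h1).
by exists s'; split => //; apply: tr h1 ht'.
Qed.
Definition ins i (z : seq 'I_3) := take i z ++ la :: lb :: drop i z.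
Definition Uf (P : seq nat) z := foldr ins z P.
Fixpoint validU (P : seq nat) k := if P is i :: P' then (i <= k + 2 * size P') && validU P' k else true.

Lemma size_ins i z : size (ins i z) = (size z).+2.
Proof. by rewrite /ins size_cat /= !addnS -size_cat cat_take_drop. Qed.

Lemma size_Uf P z : size (Uf P z) = size z + 2 * size P.
Proof. elim: P => [|i P IH] /=; first by rewrite addn0. rewrite size_ins IH; lia. Qed.

Lemma ins_inj i z1 z2 : size z1 = size z2 -> ins i z1 = ins i z2 -> z1 = z2.
Proof.
move=> hs /eqP; rewrite /ins eqseq_cat; last by rewrite !size_take hs.
case/andP => /eqP h1; rewrite !eqseq_cons /= => /eqP h2.
by rewrite -(cat_take_drop i z1) h1 h2 cat_take_drop.
Qed.

Lemma Uf_inj P z1 z2 : size z1 = size z2 -> Uf P z1 = Uf P z2 -> z1 = z2.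
Proof.
move=> hs; elim: P => //= i P IH h; apply: IH.
by apply: (ins_inj _ h); rewrite !size_Uf hs.
Qed.

Lemma nth_ins_i i z : i <= size z -> nth lc (ins i z) i = la.
Proof. by move=> h; rewrite /ins nth_cat size_takel // ltnn subnn. Qed.

Lemma noA P z : all (fun l => l != la) z -> pairwise (fun a b => b < a) P -> validU P (size z) ->
  forall j, all (fun p => p < j) P -> nth lc (Uf P z) j != la.
Proof.
move=> hz; elim: P => [|i P IH] /=.
  move=> _ _ j _; case: (ltnP j (size z)) => hj; last by rewrite nth_default.
  by move/allP: hz; apply; apply: mem_nth.
case/andP => hallP hp /andP [hi hv] j /andP [hij hPj].
have hi' : i <= size (Uf P z) by rewrite size_Uf.
rewrite /ins nth_cat size_takel // ltnNge ltnW //=.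
have [e|lt] : j = i.+1 \/ i.+2 <= j by lia.
  by rewrite e subSnn.
have -> : j - i = (j - i - 2).+2 by lia.
rewrite /= nth_drop.
have -> : i + (j - i - 2) = j - 2 by lia.
apply: IH => //; apply: sub_all hallP => p /=; lia.
Qed.

Lemma posInj P : forall P' z, all (fun l => l != la) z ->
  pairwise (fun a b => b < a) P -> pairwise (fun a b => b < a) P' ->
  validU P (size z) -> validU P' (size z) -> Uf P z = Uf P' z -> P = P'.
Proof.
elim: P => [|i P IH] [|i' P'] z hz //=.
- by move=> _ _ _ _ /(congr1 size); rewrite size_ins size_Uf; lia.
- by move=> _ _ _ _ /(congr1 size); rewrite size_ins size_Uf; lia.
move=> /andP [hall hp] /andP [hall' hp'] /andP [hi hv] /andP [hi' hv'] e.
have hA : nth lc (Uf (i :: P) z) i = la by rewrite /= nth_ins_i // size_Uf.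
have hA' : nth lc (Uf (i' :: P') z) i' = la by rewrite /= nth_ins_i // size_Uf.
have e' : Uf (i :: P) z = Uf (i' :: P') z := e.
have eii : i = i'.
  case: (ltngtP i i') => // hlt.
    have H1 : all (fun p => p < i') (i :: P) by rewrite /= hlt; apply: sub_all hall => p /=; lia.
    have H2 : pairwise (fun a b => b < a) (i :: P) by rewrite /= hall hp.
    have H3 : validU (i :: P) (size z) by rewrite /= hi hv.
    have := @noA (i :: P) z hz H2 H3 i' H1.
    by rewrite e' hA' eqxx.
  have H1 : all (fun p => p < i) (i' :: P') by rewrite /= hlt; apply: sub_all hall' => p /=; lia.
  have H2 : pairwise (fun a b => b < a) (i' :: P') by rewrite /= hall' hp'.
  have H3 : validU (i' :: P') (size z) by rewrite /= hi' hv'.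
  have := @noA (i' :: P') z hz H2 H3 i H1.
  by rewrite -e' hA eqxx.
subst i'; congr cons; apply: (IH P' z) => //.
apply: (ins_inj (i := i)) => //.
by move: (congr1 size e); rewrite !size_ins; case.
Qed.
Definition pos (g : bool * nat * nat) := g.1.2.
Definition Ucup s z := Uf (map pos s) z.
Definition Vcap t z := Uf (rev (map pos t)) z.

Lemma tgt_cupW s k : cupw s -> wt (evalW k s) -> tgt (evalW k s) = k + 2 * size s.
Proof.
elim: s => [|[[c i] r] s IH] //=; first by rewrite addn0.
case/andP => /= hc hs [_ hw e]; move: hc e; case: c => // _ /= e.
by move: (IH hs hw); rewrite e; lia.
Qed.

Lemma valid_cup s k : cupw s -> wt (evalW k s) -> validU (map pos s) k.
Proof.
elim: s => [|[[c i] r] s IH] //= /andP [/= hc hs] [_ hw e].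
move: hc e; case: c => // _ e.
rewrite (IH hs hw) andbT size_map; move: (tgt_cupW hs hw); rewrite e /=; rewrite /pos /=; lia.
Qed.

Lemma validU_rcons Q i k : validU (rcons Q i) k = (i <= k) && validU Q (k + 2).
Proof.
elim: Q k => [|j Q IH] k /=; first by rewrite addn0 andbT.
rewrite IH size_rcons.
have -> : (j <= k + 2 * (size Q).+1) = (j <= k + 2 + 2 * size Q) by congr (_ <= _); lia.
by rewrite andbCA.
Qed.

Lemma valid_cap t n : capw t -> wt (evalW n t) -> validU (rev (map pos t)) (tgt (evalW n t)).
Proof.
elim: t => [|[[c i] r] t IH] //= /andP [/= hc ht] [_ hw e].
move: hc e; case: c => // _ e.
rewrite rev_cons validU_rcons /pos /=; apply/andP; split; first lia.
by move: (IH ht hw); rewrite e /=; have -> : i + (0 + r) + 2 = i + (2 + r) by lia.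
Qed.

Lemma pairwise_rev (T : Type) (rr : T -> T -> bool) s : pairwise rr (rev s) = pairwise (fun x y => rr y x) s.
Proof.
elim: s => //= x s IH; rewrite rev_cons pairwise_rcons IH all_rev.
by [].
Qed.

Lemma recon_cup s s' k : cupw s -> cupw s' -> wt (evalW k s) -> wt (evalW k s') ->
  map pos s = map pos s' -> s = s'.
Proof.
elim: s s' => [|[[c i] r] s IH] [|[[c' i'] r'] s'] //=.
case/andP => /= hc hs /andP [/= hc' hs'] [_ hw e] [_ hw' e'] [ei em].
have ei' : i = i' := ei. clear ei.
have es := IH s' hs hs' hw hw' em; subst s' i'.
move: c c' hc hc' e e' => [] [] // _ _ /= e e'.
by rewrite e' in e; have -> : r = r' by lia.
Qed.

Lemma recon_cap t t' n : capw t -> capw t' -> wt (evalW n t) -> wt (evalW n t') ->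
  map pos t = map pos t' -> t = t'.
Proof.
elim: t t' => [|[[c i] r] t IH] [|[[c' i'] r'] t'] //=.
case/andP => /= hc hs /andP [/= hc' hs'] [_ hw e] [_ hw' e'] [ei em].
have ei' : i = i' := ei. clear ei.
have es := IH t' hs hs' hw hw' em; subst t' i'.
move: c c' hc hc' e e' => [] [] // _ _ /= e e'.
by rewrite e' in e; have -> : r = r' by lia.
Qed.
Local Open Scope ring_scope.

Lemma sem_Lcup i r y x : sem (L i Cupt r) y x = ind ((y == ins i x) && (size x == (i + r)%N)).
Proof.
rewrite /= !take0 !drop0 eqxx andbT -!indA; congr ind.
apply/idP/idP.
  case/andP => /andP [/eqP e1 /eqP e2] /andP [/eqP e3 /andP [/eqP e4 /eqP e5]].
  apply/andP; split.
    by apply/eqP; rewrite -(cat_take_drop i y) e1 -(cat_take_drop 2 (drop i y)) e3 e4.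
  by rewrite -(cat_take_drop i x) size_cat e2 e5.
case/andP => /eqP -> /eqP hs.
have hi : (i <= size x)%N by lia.
rewrite /ins take_size_cat ?size_takel // drop_size_cat ?size_takel // /= take0 drop0 !eqxx /=.
by rewrite size_drop; apply/eqP; lia.
Qed.

Lemma sem_Lcap i r y x : sem (L i Capt r) y x = ind ((x == ins i y) && (size y == (i + r)%N)).
Proof.
rewrite /= !take0 !drop0 eqxx /= -!indA; congr ind.
apply/idP/idP.
  case/andP => /andP [/eqP e1 /eqP e2] /andP [/eqP e3 /andP [/eqP e4 /eqP e5]].
  have hi : size (take i y) = i by rewrite e1.
  apply/andP; split.
    by apply/eqP; rewrite -(cat_take_drop i x) -e1 -(cat_take_drop 2 (drop i x)) e3 -e4.
  by rewrite -(cat_take_drop i y) size_cat hi e4 e5.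
case/andP => /eqP -> /eqP hs.
have hi : (i <= size y)%N by lia.
rewrite /ins take_size_cat ?size_takel // drop_size_cat ?size_takel // /= ?take0 ?drop0 !eqxx /=.
by rewrite size_drop; apply/eqP; lia.
Qed.
Lemma sem_comp (f g : term) y x : sem (Comp f g) y x = \sum_(w <- words (tgt g)) sem f y w * sem g w x.
Proof. by []. Qed.
Lemma evalW_cons k g s : evalW k (g :: s) = Comp (gen g) (evalW k s).
Proof. by []. Qed.

Lemma sem_cupW s k : cupw s -> wt (evalW k s) -> forall y x,
  sem (evalW k s) y x = ind ((y == Ucup s x) && (size x == k)).
Proof.
elim: s => [|[[c i] r] s IH]; first by [].
move=> /andP [hc hs] [_ hw e] y x.
move: hc e; case: c => // _ e; rewrite /= in e.
rewrite evalW_cons sem_comp (tgt_cupW hs hw).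
rewrite (eq_bigr (fun w => ind (w == Ucup s x) * (ind ((y == ins i w) && (size w == (i + r)%N)) * ind (size x == k)))); last first.
  by move=> w _; rewrite sem_Lcup IH // (indA (w == _)) mulrCA.
rewrite (sum_delta _ (fun w => ind ((y == ins i w) && (size w == (i + r)%N)) * ind (size x == k))).
have hsz : size (Ucup s x) = (size x + 2 * size s)%N by rewrite /Ucup size_Uf size_map.
have ht := tgt_cupW hs hw; rewrite e in ht.
have -> : (size (Ucup s x) == k + 2 * size s)%N = (size x == k) by rewrite hsz eqn_add2r.
have -> : (size (Ucup s x) == i + r)%N = (size x == k) by rewrite hsz; apply/eqP/eqP; lia.
rewrite /Ucup /=.
by case: (size x == k); case: (_ == _); rewrite /ind ?mulr0 ?mul0r ?mulr1 ?mul1r.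
Qed.
Lemma Vcap_cons g t y : Vcap (g :: t) y = Vcap t (ins g.1.2 y).
Proof. by rewrite /Vcap /= rev_cons /Uf foldr_rcons. Qed.

Lemma sem_capW t n : capw t -> wt (evalW n t) -> forall y x,
  sem (evalW n t) y x = ind ((x == Vcap t y) && (size y == tgt (evalW n t))).
Proof.
elim: t => [|[[c i] r] t IH].
  by move=> _ _ y x /=; rewrite eq_sym; case: eqP => [->|].
move=> /andP [hc hs] [_ hw e] y x.
move: hc e; case: c => // _ e; rewrite /= in e.
rewrite evalW_cons sem_comp e.
rewrite (eq_bigr (fun w => ind (w == ins i y) * (ind (size y == (i + r)%N) * ind ((x == Vcap t w) && (size w == (i + (2 + r))%N))))); last first.
  by move=> w _; rewrite sem_Lcap IH // e indA mulrA.
rewrite (sum_delta _ (fun w => ind (size y == (i + r)%N) * ind ((x == Vcap t w) && (size w == (i + (2 + r))%N)))).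
rewrite Vcap_cons size_ins /=.
have -> : ((size y).+2 == i + (2 + r))%N = (size y == i + r)%N by apply/eqP/eqP; lia.
have -> : (size y == i + (0 + r))%N = (size y == i + r)%N by rewrite add0n.
by case: (size y == _); case: (_ == _); rewrite /ind ?mulr0 ?mul0r ?mulr1 ?mul1r.
Qed.
Lemma count_ins i z : count_mem lc (ins i z) = count_mem lc z.
Proof.
by rewrite /ins count_cat /= -[in RHS](cat_take_drop i z) count_cat !add0n.
Qed.

Lemma count_Uf P z : count_mem lc (Uf P z) = count_mem lc z.
Proof. by elim: P => //= i P IH; rewrite count_ins IH. Qed.

Lemma sem_cc s t k n : cupw s -> capw t -> wt (evalW k s) -> wt (evalW n t) -> tgt (evalW n t) = k ->
  forall y x, sem (Comp (evalW k s) (evalW n t)) y x =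
    \sum_(w <- words k) ind ((y == Ucup s w) && (size w == k)) * ind ((x == Vcap t w) && (size w == k)).
Proof.
move=> hs ht hws hwt e y x; rewrite sem_comp e; apply: eq_bigr => w _.
by rewrite sem_cupW // sem_capW // e.
Qed.

Lemma ind_nz b : ind b != 0 -> b.
Proof. by case: b => //; rewrite /ind eqxx. Qed.

Lemma witness s t k n : cupw s -> capw t -> wt (evalW k s) -> wt (evalW n t) -> tgt (evalW n t) = k ->
  sem (Comp (evalW k s) (evalW n t)) (Ucup s (nseq k lc)) (Vcap t (nseq k lc)) = 1.
Proof.
move=> hs ht hws hwt e; rewrite sem_cc //.
rewrite (eq_bigr (fun w => ind (w == nseq k lc) * ind ((Vcap t (nseq k lc) == Vcap t w) && (size w == k)))).
  rewrite (sum_delta _ (fun w => ind ((Vcap t (nseq k lc) == Vcap t w) && (size w == k)))).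
  by rewrite size_nseq !eqxx /ind /= mulr1.
move=> w _; congr (ind _ * _).
case: (w =P nseq k lc) => [->|ne]; first by rewrite eqxx size_nseq eqxx.
case: (size w =P k) => [ew|]; last by rewrite andbF.
rewrite andbT; apply/negbTE/negP => /eqP h.
by apply: ne; apply: (Uf_inj _ (esym h)); rewrite size_nseq.
Qed.

Lemma extract s t k n y x : cupw s -> capw t -> wt (evalW k s) -> wt (evalW n t) -> tgt (evalW n t) = k ->
  sem (Comp (evalW k s) (evalW n t)) y x != 0 ->
  exists w, [/\ size w = k, y = Ucup s w & x = Vcap t w].
Proof.
move=> hs ht hws hwt e; rewrite sem_cc // => /sum_nz [w _].
rewrite mulf_eq0 negb_or => /andP [/ind_nz /andP [/eqP h1 /eqP h2] /ind_nz /andP [/eqP h3 _]].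
by exists w.
Qed.

Lemma half s t k s' t' k' n :
  cupw s -> capw t -> wt (evalW k s) -> wt (evalW n t) -> tgt (evalW n t) = k ->
  cupw s' -> capw t' -> wt (evalW k' s') -> wt (evalW n t') -> tgt (evalW n t') = k' ->
  (forall y x, sem (Comp (evalW k s) (evalW n t)) y x = sem (Comp (evalW k' s') (evalW n t')) y x) ->
  (k <= k')%N /\ (k = k' -> Ucup s (nseq k lc) = Ucup s' (nseq k lc) /\ Vcap t (nseq k lc) = Vcap t' (nseq k lc)).
Proof.
move=> hs ht hws hwt e hs' ht' hws' hwt' e' H.
have := witness hs ht hws hwt e; rewrite H => h1.
have [w [hw h2 h3]] : exists w, [/\ size w = k', Ucup s (nseq k lc) = Ucup s' w & Vcap t (nseq k lc) = Vcap t' w].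
  by apply: (extract hs' ht' hws' hwt' e'); rewrite h1 oner_neq0.
have hc : count_mem lc w = k.
  have e1 : (pred1 lc lc : nat) = 1%N by rewrite /= ?eqxx.
  by move: (congr1 (count_mem lc) h2); rewrite /Ucup !count_Uf count_nseq e1 mul1n => ->.
split; first by rewrite -hw -hc count_size.
move=> ekk; rewrite -ekk in hw.
have : all (pred1 lc) w by rewrite all_count hc hw eqxx.
move/all_pred1P; rewrite hw => ew.
by rewrite ew in h2 h3; split.
Qed.

Lemma uniq_core s t k s' t' k' n :
  cupw s -> capw t -> wt (evalW k s) -> wt (evalW n t) -> tgt (evalW n t) = k ->
  pairwise gdec s -> pairwise ginc t ->
  cupw s' -> capw t' -> wt (evalW k' s') -> wt (evalW n t') -> tgt (evalW n t') = k' ->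
  pairwise gdec s' -> pairwise ginc t' ->
  (forall y x, sem (Comp (evalW k s) (evalW n t)) y x = sem (Comp (evalW k' s') (evalW n t')) y x) ->
  [/\ k = k', s = s' & t = t'].
Proof.
move=> hs ht hws hwt e ps pt hs' ht' hws' hwt' e' ps' pt' H.
have [h1 h1'] := half hs ht hws hwt e hs' ht' hws' hwt' e' H.
have [h2 _] := half hs' ht' hws' hwt' e' hs ht hws hwt e (fun y x => esym (H y x)).
have ekk : k = k' by apply/eqP; rewrite eqn_leq h1 h2.
have [eU eV] := h1' ekk.
have hz : all (fun l => l != la) (nseq k lc) by rewrite all_nseq orbT.
rewrite -ekk in hws'.
split => //.
  apply: (recon_cup hs hs' hws hws').
  apply: (posInj hz) eU.
  - by rewrite pairwise_map.
  - by rewrite pairwise_map.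
  - by rewrite size_nseq; apply: valid_cup.
  - by rewrite size_nseq; apply: valid_cup.
apply: (recon_cap ht ht' hwt hwt').
have v1 : validU (rev (map pos t)) (size (nseq k lc)) by rewrite size_nseq -e; apply: valid_cap.
have v2 : validU (rev (map pos t')) (size (nseq k lc)) by rewrite size_nseq ekk -e'; apply: valid_cap.
have p1 : pairwise (fun a b => b < a)%N (rev (map pos t)) by rewrite pairwise_rev pairwise_map.
have p2 : pairwise (fun a b => b < a)%N (rev (map pos t')) by rewrite pairwise_rev pairwise_map.
have h := posInj hz p1 p2 v1 v2 eV.
by rewrite -(revK (map pos t)) h revK.
Qed.
Lemma okg_cupw w : all (okg true false) w -> cupw w.
Proof. by elim: w => //= [[[c i] r] w IH] /andP [h /IH ->]; rewrite andbT; move: h; rewrite /okg /=; case: c. Qed.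
Lemma okg_capw w : all (okg false true) w -> capw w.
Proof. by elim: w => //= [[[c i] r] w IH] /andP [h /IH ->]; rewrite andbT; move: h; rewrite /okg /=; case: c. Qed.

Lemma canon_cup_of (u : term) : built true false u ->
  exists s, [/\ cupw s, pairwise gdec s & teq u (evalW (src u) s)].
Proof.
move=> bu; have [w [aw hw]] := slice bu.
have [s [cs ps hs]] := canonCup (okg_cupw aw) (wtr hw).
by exists s; split => //; apply: tr hw hs.
Qed.

Lemma canon_cap_of (v : term) : built false true v ->
  exists t, [/\ capw t, pairwise ginc t & teq v (evalW (src v) t)].
Proof.
move=> bv; have [w [aw hw]] := slice bv.
have [t [ct pt ht]] := canonCap (okg_capw aw) (wtr hw).
by exists t; split => //; apply: tr hw ht.
Qed.

Lemma uniqueness (x u v u' v' : term) :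
  cup_diagram u -> cap_diagram v -> src u = tgt v -> teq x (Comp u v) ->
  cup_diagram u' -> cap_diagram v' -> src u' = tgt v' -> teq x (Comp u' v') ->
  [/\ src u = src u', teq u u' & teq v v'].
Proof.
case=> bu _ [bv _] euv hx [bu' _] [bv' _] euv' hx'.
have [s [cs ps hU]] := canon_cup_of bu.
have [t [ct pt hV]] := canon_cap_of bv.
have [s' [cs' ps' hU']] := canon_cup_of bu'.
have [t' [ct' pt' hV']] := canon_cap_of bv'.
have en : src v = src v' by rewrite -[src v]/(src (Comp u v)) -(srcE hx) (srcE hx').
rewrite -en in hV'.
have e1 : tgt (evalW (src v) t) = src u by rewrite -(tgtE hV) euv.
have e2 : tgt (evalW (src v) t') = src u' by rewrite -(tgtE hV') euv'.
have h1 : teq (Comp u v) (Comp (evalW (src u) s) (evalW (src v) t)).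
  by apply: teq_comp.
have h2 : teq (Comp u' v') (Comp (evalW (src u') s') (evalW (src v) t')).
  by apply: teq_comp.
have H := sound (tr (ts h1) (tr (ts hx) (tr hx' h2))).
have [ek es et] := uniq_core cs ct (wtr hU) (wtr hV) e1 ps pt cs' ct' (wtr hU') (wtr hV') e2 ps' pt' H.
split => //.
  by apply: tr hU _; rewrite ek es; apply: ts.
by apply: tr hV _; rewrite et; apply: ts.
Qed.
End S.

Theorem mainTheorem16 (K : fieldType) (x : term K) :
  TL_diagram x ->
  (exists (u v : term K),
      [/\ cup_diagram u, cap_diagram v, src u = tgt v & teq x (Comp u v)]) /\
  (forall u v u' v' : term K,
      cup_diagram u -> cap_diagram v -> src u = tgt v -> teq x (Comp u v) ->
      cup_diagram u' -> cap_diagram v' -> src u' = tgt v' -> teq x (Comp u' v') ->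
      [/\ src u = src u', teq u u' & teq v v']).
Proof.
move=> hx; split; first exact: existence.
by move=> u v u' v'; apply: uniqueness.
Qed.
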